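(* Let $\mathcal X$ be a finite totally ordered set, $Q\in\mathbb R^{\mathcal X\times\mathcal X}$ an irreducible generator matrix with invariant probability vector $\pi$ having strictly positive entries ($Q^{\mathsf T}\pi=0$), and for each $x\in\mathcal X$ let $\eta_x:[0,\infty)\to[0,\infty)$ be strictly increasing with $\eta_x(0)=0$, $\eta_x(1)=1$. Set $\kappa_{xy}(\rho_x):=Q_{xy}\pi_x\eta_x(\rho_x/\pi_x)$ and, for $\rho\in\mathcal P(\mathcal X)$ and $\zeta\in\mathbb R^{\mathcal X^2/2}$, $$\mathcal H(\rho,\zeta):=\sum_{(x,y)\in\mathcal X^2/2}\Big[\kappa_{xy}(\rho_x)\big(e^{\zeta_{xy}}-1\big)+\kappa_{yx}(\rho_y)\big(e^{-\zeta_{xy}}-1\big)\Big].$$ Let $\mathcal V(\rho):=\sum_{x}\int_{\bar\rho_x}^{\rho_x}\log\eta_x(z/\pi_x)\,dz+C$ if $\rho\ge\bar\rho$ coordinatewise and $\mathcal V(\rho):=\infty$ otherwise, where each $\bar\rho_x\ge0$ is as small as possible such that $\log\eta_x(\cdot/\pi_x)$ is integrable on $[\bar\rho_x,\cdot]$ and $C$ is such that $\inf\mathcal V=0$. Then at every point of differentiability $\rho\in\mathcal P(\mathcal X)$ of $\mathcal V$ (where $d\mathcal V(\rho)_x=\log\eta_x(\rho_x/\pi_x)$), one has $\mathcal H(\rho,\nabla d\mathcal V(\rho))=0$.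
   Context: $\mathcal P(\mathcal X)$ is the set of probability vectors on $\mathcal X$. $\mathcal X^2/2:=\{(x,y)\in\mathcal X\times\mathcal X:x<y\}$. For $\xi\in\mathbb R^{\mathcal X}$ the discrete gradient is $(\nabla\xi)_{xy}:=\xi_y-\xi_x$ for $(x,y)\in\mathcal X^2/2$. (This is the statement that $\mathcal V$ is a quasipotential for the zero-range L-function with dual $\mathcal H$.) *)

(* Defs.v *)
From HB Require Import structures.
From mathcomp Require Import all_boot all_order all_algebra.
From mathcomp Require Import reals.
From mathcomp Require Import sequences exp.
Set Implicit Arguments. Unset Strict Implicit. Unset Printing Implicit Defensive.
Import Order.TTheory GRing.Theory Num.Theory.
Local Open Scope ring_scope.

Section Defs.
Variables (R : realType) (X : finType).

Definition generator_matrix (Q : X -> X -> R) : Prop :=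
  (forall x y, x != y -> 0 <= Q x y) /\ (forall x, \sum_(y : X) Q x y = 0).

Definition irreducible_gen (Q : X -> X -> R) : Prop :=
  forall x y, connect (fun a b => (a != b) && (0 < Q a b)) x y.

Definition prob_vec (rho : X -> R) : Prop :=
  (forall x, 0 <= rho x) /\ \sum_(x : X) rho x = 1.

Definition invariant_vec (Q : X -> X -> R) (pi : X -> R) : Prop :=
  forall y, \sum_(x : X) Q x y * pi x = 0.

Definition admissible_eta (eta : R -> R) : Prop :=
  [/\ forall a, 0 <= a -> 0 <= eta a,
      forall a b, 0 <= a -> a < b -> eta a < eta b,
      eta 0 = 0 & eta 1 = 1].

Definition kappa (Q : X -> X -> R) (pi : X -> R) (eta : X -> R -> R)
  (x y : X) (r : R) : R := Q x y * pi x * eta x (r / pi x).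

Definition dgrad (xi : X -> R) : X -> X -> R := fun x y => xi y - xi x.

Definition dV (pi : X -> R) (eta : X -> R -> R) (rho : X -> R) : X -> R :=
  fun x => ln (eta x (rho x / pi x)).

End Defs.

Definition Ham (R : realType) (d : Order.disp_t) (X : finOrderType d)
  (Q : X -> X -> R) (pi : X -> R) (eta : X -> R -> R)
  (rho : X -> R) (zeta : X -> X -> R) : R :=
  \sum_(p : X * X | (p.1 < p.2)%O)
    (kappa Q pi eta p.1 p.2 (rho p.1) * (expR (zeta p.1 p.2) - 1)
     + kappa Q pi eta p.2 p.1 (rho p.2) * (expR (- zeta p.1 p.2) - 1)).

(* Main.v *)
Require Import Defs.
From HB Require Import structures.
From mathcomp Require Import all_boot all_order all_algebra.
From mathcomp Require Import reals.
From mathcomp Require Import sequences exp.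
From mathcomp Require Import ring.
Import Order.TTheory GRing.Theory Num.Theory.
Local Open Scope ring_scope.

Theorem proposition5p1 (R : realType) (d : Order.disp_t) (X : finOrderType d)
  (Q : X -> X -> R) (pi : X -> R) (eta : X -> R -> R)
  (hQ : generator_matrix Q) (hirr : irreducible_gen Q)
  (hpi : prob_vec pi) (hpipos : forall x, 0 < pi x) (hinv : invariant_vec Q pi)
  (heta : forall x, admissible_eta (eta x))
  (rho : X -> R) (hrho : prob_vec rho)
  (hdiff : forall x, 0 < rho x) :
  Ham Q pi eta rho (dgrad (dV pi eta rho)) = 0.
Proof.
set e := fun x => eta x (rho x / pi x).
have epos : forall x, 0 < e x.
  move=> x; case: (heta x) => _ hlt h0 _; rewrite /e -h0; apply: hlt => //.
  by apply: divr_gt0.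
set f := fun x y => Q x y * pi x * (e y - e x).
have hterm : forall p : X * X, kappa Q pi eta p.1 p.2 (rho p.1) *
      (expR (dgrad (dV pi eta rho) p.1 p.2) - 1) +
    kappa Q pi eta p.2 p.1 (rho p.2) *
      (expR (- dgrad (dV pi eta rho) p.1 p.2) - 1) = f p.1 p.2 + f p.2 p.1.
  move=> [a b] /=; rewrite /kappa /dgrad /dV /f -/(e a) -/(e b).
  rewrite opprB !expRD !expRN !lnK ?posrE ?epos //.
  have ha := epos a; have hb := epos b.
  by field; rewrite !gt_eqF.
rewrite /Ham (eq_bigr _ (fun p _ => hterm p)) big_split /=.
have hall : \sum_(p : X * X) f p.1 p.2 = 0.
  rewrite -(pair_bigA _ f) /=.
  have -> : \sum_x \sum_y f x y =
      \sum_x \sum_y Q x y * pi x * e y - \sum_x \sum_y Q x y * pi x * e x.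
    rewrite -sumrB; apply: eq_bigr => x _; rewrite -sumrB.
    by apply: eq_bigr => y _; rewrite /f mulrBr.
  rewrite exchange_big /=.
  rewrite (eq_bigr (fun=> 0)); last first.
    by move=> y _; rewrite -mulr_suml hinv mul0r.
  rewrite [X in _ - X](eq_bigr (fun=> 0)); last first.
    by move=> x _; rewrite -mulr_suml -mulr_suml (proj2 hQ x) !mul0r.
  by rewrite big1 // subrr.
have hB : \sum_(p : X * X | (p.1 < p.2)%O) f p.2 p.1 =
    \sum_(p : X * X | (p.2 < p.1)%O) f p.1 p.2.
  rewrite (reindex_inj (h := fun p : X * X => (p.2, p.1))) //=.
  by move=> [a b] [c d0] [-> ->].
have hC : \sum_(p : X * X | (p.2 < p.1)%O) f p.1 p.2 =
    \sum_(p : X * X | ~~ (p.1 < p.2)%O) f p.1 p.2.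
  rewrite [RHS](bigID (fun p : X * X => (p.2 < p.1)%O)).
  rewrite [X in _ = _ + X]big1 ?addr0; last first.
    move=> [a b] /= /andP [h1 h2]; rewrite /f.
    have ab : a = b.
      apply: Order.POrderTheory.le_anti.
      by rewrite !Order.TotalTheory.leNgt h1 h2.
    by rewrite ab subrr mulr0.
  by apply: eq_bigl => -[a b] /=; case: Order.TotalTheory.ltgtP.
rewrite hB hC -[RHS]hall [RHS](bigID (fun p : X * X => (p.1 < p.2)%O)).
by [].
Qed.
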